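(* Let $d\ge1$ and let $P$ be a probability distribution on $\{0,1\}^d$ with $P(\nu)>0$ for all $\nu\in\{0,1\}^d$. Fix $\omega\in\{0,1\}^d$. The map $q\mapsto x=(x_1,\ldots,x_d)$ with $x_i:=\left(\frac{q_i}{1-q_i}\right)^{1-2\omega_i}$ is a bijection from $(0,1)^d$ onto $(0,\infty)^d$, and in terms of $x$, \[ f_\omega(q)=\prod_{i=1}^d(1+x_i). \] Moreover, for $q\in(0,1)^d$: $q\in\mathcal{Q}_\omega$ if and only if for every $\nu\in\{0,1\}^d$, \[ \prod_{i:\,\nu_i\ne\omega_i}x_i\le\frac{P(\nu)}{P(\omega)}, \] where the empty product (when $\nu=\omega$) equals $1$.
   Context: For $\omega\in\{0,1\}^d$ and $q\in[0,1]^d$, $f_\omega(q):=\prod_{i=1}^d q_i^{-\omega_i}(1-q_i)^{\omega_i-1}\in\mathbb{R}\cup\{+\infty\}$ (with $0^0=1$, $1/0=+\infty$), and $\mathcal{Q}_\omega:=\{q\in[0,1]^d\mid \forall\nu\in\{0,1\}^d:\ P(\omega)f_\omega(q)\le P(\nu)f_\nu(q)\}$. *)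

(* Defs.v *)
From HB Require Import structures.
From mathcomp Require Import all_boot all_order all_algebra.
From mathcomp Require Import boolp classical_sets functions reals constructive_ereal.
Set Implicit Arguments. Unset Strict Implicit. Unset Printing Implicit Defensive.
Import Order.TTheory GRing.Theory Num.Theory.
Local Open Scope ring_scope.
Local Open Scope classical_set_scope.

Section Defs.
Variables (R : realType) (d : nat).

(* Points of {0,1}^d: finite functions 'I_d -> bool (true = 1). *)
Definition cube := {ffun 'I_d -> bool}.

Definition einv (r : R) : \bar R := if r == 0 then +oo%E else (r^-1)%:E.

(* f_omega(q) = prod_i q_i^{-omega_i} (1-q_i)^{omega_i - 1}, with 0^0 = 1, 1/0 = +oo:
   the i-th factor is 1/q_i if omega_i = 1 and 1/(1-q_i) if omega_i = 0. *)
Definition f_omega (w : cube) (q : 'I_d -> R) : \bar R :=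
  (\prod_(i < d) (if w i then einv (q i) else einv (1 - q i)))%E.

Definition closed_cube : set ('I_d -> R) :=
  [set q | forall i, 0 <= q i <= 1].
Definition open_cube : set ('I_d -> R) :=
  [set q | forall i, 0 < q i < 1].
Definition pos_orthant : set ('I_d -> R) :=
  [set x | forall i, 0 < x i].

Definition Q_omega (P : cube -> R) (w : cube) : set ('I_d -> R) :=
  [set q | closed_cube q /\
     forall v : cube, ((P w)%:E * f_omega w q <= (P v)%:E * f_omega v q)%E].

Definition xmap (w : cube) (q : 'I_d -> R) : 'I_d -> R :=
  fun i => (q i / (1 - q i)) ^ (1 - 2 * (w i)%:Z).

End Defs.

(* Main.v *)
Require Import Defs.
From HB Require Import structures.
From mathcomp Require Import all_boot all_order all_algebra.
From mathcomp Require Import boolp classical_sets functions reals constructive_ereal.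
From mathcomp Require Import ring lra.
Import Order.TTheory GRing.Theory Num.Theory.
Local Open Scope ring_scope.
Local Open Scope classical_set_scope.

Set Implicit Arguments.
Section Aux.
Variables (R : realType) (d : nat).

Lemma xmapE (w : cube d) (q : 'I_d -> R) i :
  xmap w q i = if w i then (1 - q i) / q i else q i / (1 - q i).
Proof.
rewrite /xmap; case: (w i) => /=.
  by rewrite exprN1 invf_div.
by rewrite expr1z.
Qed.

Definition gf (q : 'I_d -> R) (b : bool) i : R :=
  if b then (q i)^-1 else (1 - q i)^-1.

Lemma f_omegaE (v : cube d) (q : 'I_d -> R) : open_cube q ->
  f_omega v q = (\prod_(i < d) gf q (v i) i)%:E.
Proof.
move=> hq; rewrite /f_omega -prodEFin; apply: eq_bigr => i _.
have [h0 h1] := andP (hq i).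
rewrite /gf /einv; case: (v i).
  by rewrite gt_eqF.
by rewrite gt_eqF // subr_gt0.
Qed.

Lemma gf_pos (q : 'I_d -> R) b i : open_cube q -> 0 < gf q b i.
Proof.
move=> hq; have [h0 h1] := andP (hq i).
by rewrite /gf; case: b; rewrite invr_gt0 // subr_gt0.
Qed.

Lemma xmap_pos (w : cube d) (q : 'I_d -> R) i : open_cube q -> 0 < xmap w q i.
Proof.
move=> hq; have [h0 h1] := andP (hq i).
have h2 : 0 < 1 - q i by rewrite subr_gt0.
by rewrite xmapE; case: (w i); apply: divr_gt0.
Qed.

Lemma gf_w (w : cube d) (q : 'I_d -> R) i : open_cube q ->
  gf q (w i) i = 1 + xmap w q i.
Proof.
move=> hq; have [h0 h1] := andP (hq i).
have h2 : 1 - q i != 0 by rewrite gt_eqF // subr_gt0.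
have h3 : q i != 0 by rewrite gt_eqF.
rewrite xmapE /gf; case: (w i); by field.
Qed.

Lemma gf_v (w v : cube d) (q : 'I_d -> R) i : open_cube q ->
  gf q (v i) i * (if v i != w i then xmap w q i else 1) = gf q (w i) i.
Proof.
move=> hq; have [h0 h1] := andP (hq i).
have h2 : 1 - q i != 0 by rewrite gt_eqF // subr_gt0.
have h3 : q i != 0 by rewrite gt_eqF.
rewrite xmapE /gf; case: (v i); case: (w i); rewrite /= ?mulr1 //; field; rewrite ?h2 ?h3 ?andbT //.
Qed.

Lemma prod_v (w v : cube d) (q : 'I_d -> R) : open_cube q ->
  (\prod_(i < d) gf q (v i) i) * (\prod_(i < d | v i != w i) xmap w q i)
  = \prod_(i < d) gf q (w i) i.
Proof.
move=> hq; rewrite [X in _ * X]big_mkcond -big_split /=.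
by apply: eq_bigr => i _; rewrite gf_v.
Qed.

End Aux.
Arguments gf {R d}.
Arguments prod_v {R d}.
Arguments f_omegaE {R d}.

Theorem lemma3 (R : realType) (d : nat) (P : cube d -> R) (w : cube d) :
  (0 < d)%N ->
  (forall v, 0 < P v) ->
  \sum_(v : cube d) P v = 1 ->
  [/\ set_bij (@open_cube R d) (@pos_orthant R d) (xmap w),
      (forall q : 'I_d -> R, open_cube q ->
         f_omega w q = (\prod_(i < d) (1 + xmap w q i))%:E) &
      (forall q : 'I_d -> R, open_cube q ->
         (Q_omega P w q <->
          forall v : cube d,
            \prod_(i < d | v i != w i) xmap w q i <= P v / P w))].
Proof.
move=> _ Ppos _; split.
- split.
  + by move=> q hq i; apply: xmap_pos.
  + move=> q1 q2 /set_mem h1 /set_mem h2 e; apply/funext => i.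
    have := congr1 (fun f => f i) e => /=; rewrite !xmapE.
    have [a0 a1] := andP (h1 i); have [b0 b1] := andP (h2 i).
    have a2 : 1 - q1 i != 0 by rewrite gt_eqF // subr_gt0.
    have a3 : q1 i != 0 by rewrite gt_eqF.
    have b2 : 1 - q2 i != 0 by rewrite gt_eqF // subr_gt0.
    have b3 : q2 i != 0 by rewrite gt_eqF.
    case: (w i) => /= E.
    * have : (1 - q1 i) * q2 i = (1 - q2 i) * q1 i.
        by transitivity (((1 - q1 i) / q1 i) * (q1 i * q2 i)); [field | rewrite E; field].
      by move=> H; lra.
    * have : q1 i * (1 - q2 i) = q2 i * (1 - q1 i).
        by transitivity ((q1 i / (1 - q1 i)) * ((1 - q1 i) * (1 - q2 i))); [field | rewrite E; field].
      by move=> H; lra.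
  + move=> x hx.
    exists (fun i => if w i then 1 / (1 + x i) else x i / (1 + x i)).
      move=> i; have := hx i => h; have h1 : 0 < 1 + x i by lra.
      case: (w i); apply/andP; split.
      * by rewrite divr_gt0.
      * by rewrite ltr_pdivrMr // mul1r; lra.
      * by rewrite divr_gt0.
      * by rewrite ltr_pdivrMr // mul1r; lra.
    apply/funext => i; rewrite xmapE /=.
    have := hx i => h; have h1 : 1 + x i != 0 by rewrite gt_eqF //; lra.
    have h2 : x i != 0 by rewrite gt_eqF.
    by case: (w i) => /=; field; rewrite ?h1 ?h2 // addrK oner_neq0.
- move=> q hq; rewrite f_omegaE //; congr (_%:E).
  by apply: eq_bigr => i _; rewrite gf_w.
- move=> q hq; have hG (v : cube d) : 0 < \prod_(i < d) gf q (v i) i.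
    by apply: prodr_gt0 => i _; apply: gf_pos.
  have hX (v : cube d) : 0 < \prod_(i < d | v i != w i) xmap w q i.
    by apply: prodr_gt0 => i _; apply: xmap_pos.
  split.
  + case=> _ H v; have := H v; rewrite !f_omegaE // -!EFinM lee_fin.
    rewrite -(prod_v w v q hq) => H1.
    rewrite ler_pdivlMr //.
    move: H1 (hG v); set G := \prod_(i < d) _; set X := \prod_(i < d | _) _ => H1 HG.
    rewrite -(ler_pM2l HG).
    have -> : G * (X * P w) = P w * (G * X) by ring.
    by rewrite [G * P v]mulrC.
  + move=> H; split.
      by move=> i; have [h0 h1] := andP (hq i); rewrite !ltW.
    move=> v; rewrite !f_omegaE // -!EFinM lee_fin -(prod_v w v q hq).
    have := H v; rewrite ler_pdivlMr // => H1.
    move: H1 (hG v); set G := \prod_(i < d) _; set X := \prod_(i < d | _) _ => H1 HG.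
    rewrite -(ler_pM2l HG) in H1.
    have <- : G * (X * P w) = P w * (G * X) by ring.
    by rewrite [P v * G]mulrC.
Qed.
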